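(* Let $N\ge1$, $\lambda_0,\dots,\lambda_N>0$ and $\gamma_0,\dots,\gamma_N\in\mathbb{C}$ distinct, and let $$\mathcal{R}(z)=\frac{\sum_{i=0}^N\sum_{j=i+1}^N\lambda_i^2\lambda_j^2(\gamma_i-\gamma_j)^2\prod_{k\neq i,j}(z-\gamma_k)}{\Big(\sum_{i=0}^N\lambda_i^2\Big)\Big(\sum_{j=0}^N\lambda_j^2\prod_{k\neq j}(z-\gamma_k)\Big)}$$ be the rational map of the JNR monopole with this data. Let $q(z)=\big(\frac{\lambda_0}{z-\gamma_0},\dots,\frac{\lambda_N}{z-\gamma_N}\big)$ and $q(\infty)=(\lambda_0,\dots,\lambda_N)$. Then there exists a unique $a=(a_0,\dots,a_N)\in\mathbb{C}^{N+1}$ such that $$\mathcal{R}(z)=\frac{\frac{a_0\lambda_0}{z-\gamma_0}+\cdots+\frac{a_N\lambda_N}{z-\gamma_N}}{\frac{\lambda_0^2}{z-\gamma_0}+\cdots+\frac{\lambda_N^2}{z-\gamma_N}}=\frac{\langle\bar a,q(z)\rangle}{\langle q(\infty),q(z)\rangle}.$$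
   Context: $\langle\cdot,\cdot\rangle$ is the standard Hermitian inner product on $\mathbb{C}^{N+1}$, conjugate-linear in the first factor, and $\bar a$ denotes the componentwise complex conjugate of $a$. *)

(* Defs.v *)
(* complex numbers C := R[i] over a real closed field R
   (mathcomp-real-closed); the paper's C is the case R = the reals. *)
From HB Require Import structures.
From mathcomp Require Import all_boot all_order all_algebra.
From mathcomp Require Export complex.
Set Implicit Arguments. Unset Strict Implicit. Unset Printing Implicit Defensive.
Import Order.TTheory GRing.Theory Num.Theory.
Local Open Scope ring_scope.
Local Open Scope complex_scope.

Section JNR.
Variable R : rcfType.
Local Notation C := R[i].

Definition hip (n : nat) (u v : 'rV[C]_n) : C := \sum_(i < n) conjc (u 0 i) * v 0 i.

Definition cconj (n : nat) (a : 'rV[C]_n) : 'rV[C]_n := \row_i conjc (a 0 i).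

Definition qz (n : nat) (lam : 'rV[R]_n) (gam : 'rV[C]_n) (z : C) : 'rV[C]_n :=
  \row_i ((lam 0 i)%:C / (z - gam 0 i)).
Definition qinf (n : nat) (lam : 'rV[R]_n) : 'rV[C]_n := \row_i (lam 0 i)%:C.

Definition jnr_num (n : nat) (lam : 'rV[R]_n) (gam : 'rV[C]_n) (z : C) : C :=
  \sum_(i < n) \sum_(j < n | (i < j)%N)
     ((lam 0 i) ^+ 2 * (lam 0 j) ^+ 2)%:C * (gam 0 i - gam 0 j) ^+ 2 *
     \prod_(k < n | (k != i) && (k != j)) (z - gam 0 k).
Definition jnr_den (n : nat) (lam : 'rV[R]_n) (gam : 'rV[C]_n) (z : C) : C :=
  (\sum_(i < n) (lam 0 i) ^+ 2)%:C *
  \sum_(j < n) ((lam 0 j) ^+ 2)%:C * \prod_(k < n | k != j) (z - gam 0 k).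
Definition jnr_map (n : nat) (lam : 'rV[R]_n) (gam : 'rV[C]_n) (z : C) : C :=
  jnr_num lam gam z / jnr_den lam gam z.

End JNR.

(* Main.v *)
Require Import Defs.
From HB Require Import structures.
From mathcomp Require Import ring.
From mathcomp Require Import all_boot all_order all_algebra complex.
Import Order.TTheory GRing.Theory Num.Theory.
Local Open Scope ring_scope.

Lemma prod_but1 (F : fieldType) n (w : 'I_n -> F) i :
  (forall k, w k != 0) ->
  \prod_(k | k != i) w k = (\prod_k w k) / w i.
Proof.
move=> hw; rewrite [in RHS](bigD1 i) //=; field; exact: hw.
Qed.

Lemma prod_but2 (F : fieldType) n (w : 'I_n -> F) i j :
  (forall k, w k != 0) -> i != j ->
  \prod_(k | (k != i) && (k != j)) w k = (\prod_k w k) / (w i * w j).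
Proof.
move=> hw hij; rewrite [in RHS](bigD1 i) //= [in RHS](bigD1 j) /=; last by rewrite eq_sym hij.
rewrite [X in _ = X / _]mulrA.
have -> : \prod_(k | (k != i) && (k != j)) w k = \prod_(i0 | (i0 != i) && (i0 != j)) w i0 by [].
field; by rewrite hw hw.
Qed.

Lemma key (F : fieldType) n (mu w : 'I_n -> F) :
  (forall k, w k != 0) -> (2%:R : F) != 0 ->
  \sum_(i < n) \sum_(j < n | (i < j)%N) mu i * mu j * (w j - w i) ^+ 2 / (w i * w j)
  = (\sum_j mu j * w j) * (\sum_i mu i / w i) - (\sum_i mu i) ^+ 2.
Proof.
move=> hw h2.
pose f (i j : 'I_n) := mu i * mu j * (w j - w i) ^+ 2 / (w i * w j).
have fs : forall i j : 'I_n, f i j = f j i by move=> i j; rewrite /f; field; rewrite hw hw.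
have ff : \sum_i \sum_j f i j = 2%:R * \sum_(i < n) \sum_(j < n | (i < j)%N) f i j.
  have e : forall i j : 'I_n, f i j = (if (i < j)%N then f i j else 0) + (if (j < i)%N then f i j else 0).
    move=> i j; case: ltngtP => h.
    - by rewrite addr0.
    - by rewrite add0r.
    - have -> : i = j by apply: val_inj.
      by rewrite /f subrr expr0n /= !mulr0 mul0r addr0.
  under eq_bigr do under eq_bigr do rewrite e.
  under eq_bigr do rewrite big_split /=.
  rewrite big_split /= exchange_big /=.
  under [X in _ + X = _]eq_bigr do under eq_bigr do rewrite fs.
  rewrite -mulr2n mulr_natl; congr (_ *+ 2).
  rewrite exchange_big /=; apply: eq_bigr => i _; by rewrite [RHS]big_mkcond.
have ef : forall i j : 'I_n, f i j = mu j * w j * (mu i / w i) + mu i * w i * (mu j / w j) - 2%:R * (mu i * mu j).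
  by move=> i j; rewrite /f; field; rewrite hw hw.
apply: (mulfI h2); rewrite -ff.
under eq_bigr do under eq_bigr do rewrite ef.
under eq_bigr do rewrite !big_split /=.
rewrite !big_split /=.
set A := \sum_(j < n) mu j * w j.
set B := \sum_(i < n) mu i / w i.
have E1 : \sum_(i < n) \sum_(i0 < n) mu i0 * w i0 * (mu i / w i) = A * B.
  rewrite mulrC big_distrlr /=; apply: eq_bigr => i _; apply: eq_bigr => j _.
  by rewrite mulrC.
have E2 : \sum_(i < n) \sum_(i0 < n) mu i * w i * (mu i0 / w i0) = A * B.
  by rewrite big_distrlr.
have E3 : \sum_(i < n) \sum_(i0 < n) - (2 * (mu i * mu i0)) = - (2 * (\sum_(i < n) mu i) ^+ 2).
  rewrite expr2 big_distrlr /= mulr_sumr -sumrN; apply: eq_bigr => i _.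
  by rewrite mulr_sumr -sumrN.
rewrite E1 E2 E3; ring.
Qed.

Lemma poly_all0 (F : numDomainType) (p : {poly F}) :
  (forall z, p.[z] = 0) -> p = 0.
Proof.
move=> hz; apply/eqP; apply/negPn/negP => hp.
have := @max_poly_roots _ p [seq (k%:R : F) | k <- iota 0 (size p)] hp.
rewrite size_map size_iota ltnn => H.
have hA : all (root p) [seq (k%:R : F) | k <- iota 0 (size p)].
  by apply/allP => x _; rewrite /root hz.
have hB : uniq [seq (k%:R : F) | k <- iota 0 (size p)].
  rewrite map_inj_uniq ?iota_uniq //.
  by move=> a b /eqP; rewrite eqr_nat => /eqP.
by have := H hA hB.
Qed.

Lemma eval_lagr (F : idomainType) n (c g : 'I_n -> F) i :
  \sum_k c k * \prod_(m | m != k) (g i - g m) = c i * \prod_(m | m != i) (g i - g m).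
Proof.
rewrite [LHS](bigD1 i) //= [X in _ + X]big1 ?addr0 // => j hj.
by rewrite (bigD1 i) /= ?subrr ?mul0r ?mulr0 // eq_sym.
Qed.

Local Open Scope complex_scope.

Theorem mainTheorem6 (R : rcfType) (N : nat) (hN : (1 <= N)%N)
    (lam : 'rV[R]_N.+1) (gam : 'rV[R[i]]_N.+1)
    (hlam : forall i, 0 < lam 0 i)
    (hgam : forall i j, gam 0 i = gam 0 j -> i = j) :
  exists! a : 'rV[R[i]]_N.+1,
    forall z : R[i],
      (forall k, z != gam 0 k) ->
      jnr_den lam gam z != 0 ->
      jnr_map lam gam z = hip (cconj a) (qz lam gam z) / hip (qinf lam) (qz lam gam z).
Proof.
pose mu k := ((lam 0 k) ^+ 2)%:C : R[i].
pose Lam := \sum_k mu k.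
have h2 : (2%:R : R[i]) != 0 by rewrite pnatr_eq0.
have hLam0 : Lam != 0.
  have hp : 0 < \sum_(k < N.+1) (lam 0 k) ^+ 2.
    rewrite (bigD1 ord0) //= ltr_wpDr ?sumr_ge0 ?exprn_gt0 // => k _.
    exact: sqr_ge0.
  apply/eqP => h; move: hp; rewrite lt0r => /andP[hne _].
  apply: (negP hne); apply/eqP; apply: complexI; rewrite rmorph_sum rmorph0; exact: h.
have hlamC : forall k, (lam 0 k)%:C != 0.
  move=> k; apply/eqP => h; have := hlam k; rewrite lt0r => /andP[hne _].
  apply: (negP hne); apply/eqP; apply: complexI; rewrite rmorph0; exact: h.
have hipq : forall z, hip (qinf lam) (qz lam gam z) = \sum_k mu k / (z - gam 0 k).
  move=> z; rewrite /hip; apply: eq_bigr => k _.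
  by rewrite !mxE conjc_real /mu rmorphXn expr2 mulrA.
have hipa : forall a z, hip (cconj a) (qz lam gam z)
    = \sum_k a 0 k * (lam 0 k)%:C / (z - gam 0 k).
  move=> a z; rewrite /hip; apply: eq_bigr => k _.
  by rewrite !mxE conjcK mulrA.
have hden : forall z, (forall k, z - gam 0 k != 0) ->
    jnr_den lam gam z = Lam * (\prod_k (z - gam 0 k)) * \sum_k mu k / (z - gam 0 k).
  move=> z hw; rewrite /jnr_den rmorph_sum -mulrA mulr_sumr; congr (_ * _).
  apply: eq_bigr => j _; rewrite (@prod_but1 _ _ (fun k => z - gam 0 k)) //.
  by rewrite mulrCA.
have hnum : forall z, (forall k, z - gam 0 k != 0) ->
    jnr_num lam gam z = (\prod_k (z - gam 0 k)) *
      \sum_(i < N.+1) \sum_(j < N.+1 | (i < j)%N) mu i * mu j *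
          ((z - gam 0 j) - (z - gam 0 i)) ^+ 2 / ((z - gam 0 i) * (z - gam 0 j)).
  move=> z hw; rewrite /jnr_num mulr_sumr; apply: eq_bigr => i _.
  rewrite mulr_sumr; apply: eq_bigr => j hij.
  have hne : i != j by apply/eqP => e; rewrite e ltnn in hij.
  rewrite (@prod_but2 _ _ (fun k => z - gam 0 k)) // /mu rmorphM.
  have -> : gam 0 i - gam 0 j = (z - gam 0 j) - (z - gam 0 i) by ring.
  field; by rewrite !hw.
have hBne : forall z, (forall k, z - gam 0 k != 0) -> jnr_den lam gam z != 0 ->
    \sum_k mu k / (z - gam 0 k) != 0.
  move=> z hw; rewrite hden //; apply: contra => /eqP ->; by rewrite mulr0.
have hwz : forall z, (forall k, z != gam 0 k) -> forall k, z - gam 0 k != 0.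
  by move=> z h k; rewrite subr_eq0.
pose Pr (a : 'rV[R[i]]_N.+1) := forall z : R[i],
      (forall k, z != gam 0 k) ->
      jnr_den lam gam z != 0 ->
      jnr_map lam gam z = hip (cconj a) (qz lam gam z) / hip (qinf lam) (qz lam gam z).
have hgd : forall k m, m != k -> gam 0 k - gam 0 m != 0.
  move=> k m hmk; rewrite subr_eq0; apply: contra hmk => /eqP e.
  by rewrite (hgam _ _ e).
have huniq : forall a1 a2, Pr a1 -> Pr a2 -> a1 = a2.
  move=> a1 a2 H1 H2.
  pose cc k := (a1 0 k - a2 0 k) * (lam 0 k)%:C.
  pose Q := \sum_k cc k *: \prod_(m | m != k) ('X - (gam 0 m)%:P).
  pose PiX := \prod_m ('X - (gam 0 m)%:P).
  pose DenX := \sum_j mu j *: \prod_(m | m != j) ('X - (gam 0 m)%:P).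
  have evQ : forall z, Q.[z] = \sum_k cc k * \prod_(m | m != k) (z - gam 0 m).
    move=> z; rewrite horner_sum; apply: eq_bigr => k _; rewrite hornerZ horner_prod.
    by under eq_bigr do rewrite hornerXsubC.
  have evD : forall z, DenX.[z] = \sum_k mu k * \prod_(m | m != k) (z - gam 0 m).
    move=> z; rewrite horner_sum; apply: eq_bigr => k _; rewrite hornerZ horner_prod.
    by under eq_bigr do rewrite hornerXsubC.
  have evP : forall z, PiX.[z] = \prod_m (z - gam 0 m).
    move=> z; rewrite horner_prod.
    by under eq_bigr do rewrite hornerXsubC.
  have G0 : Q * PiX * DenX = 0.
    apply: poly_all0 => z; rewrite !hornerM.
    case: (pickP (fun k => z == gam 0 k)) => [k /eqP hk | hnone].
      by rewrite evP (bigD1 k) //= hk subrr mul0r mulr0 mul0r.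
    have hz0 : forall k, z != gam 0 k by move=> k; rewrite hnone.
    have hw := hwz z hz0.
    have [hD|hD] := eqVneq DenX.[z] 0; first by rewrite hD mulr0.
    have hd : jnr_den lam gam z != 0.
      by rewrite /jnr_den rmorph_sum -/Lam -evD mulf_neq0.
    have hB := hBne z hw hd.
    have e := etrans (esym (H1 z hz0 hd)) (H2 z hz0 hd).
    rewrite hipq in e.
    have e2 : hip (cconj a1) (qz lam gam z) = hip (cconj a2) (qz lam gam z).
      by have := congr1 (fun x => x * \sum_k mu k / (z - gam 0 k)) e; rewrite /= !divfK.
    have eQ : Q.[z] = \prod_k (z - gam 0 k) *
        (hip (cconj a1) (qz lam gam z) - hip (cconj a2) (qz lam gam z)).
      rewrite evQ !hipa -sumrB mulr_sumr; apply: eq_bigr => k _.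
      rewrite (@prod_but1 _ _ (fun m => z - gam 0 m)) // /cc; field; exact: hw.
    by rewrite eQ e2 subrr mulr0 !mul0r.
  have PiX0 : PiX != 0.
    by apply: monic_neq0; apply: monic_prod => m _; exact: monicXsubC.
  have DenX0 : DenX != 0.
    apply/eqP => h; have := congr1 (fun p => p.[gam 0 ord0]) h.
    rewrite /= evD horner0 (@eval_lagr _ _ mu (fun k => gam 0 k)) => /eqP.
    rewrite mulf_eq0 => /orP[|].
      rewrite /mu rmorphXn expf_eq0 /= => hl.
      by move: (hlamC ord0); rewrite hl.
    move=> hp; suff : \prod_(m | m != ord0) (gam 0 ord0 - gam 0 m) != 0 by rewrite hp.
    by apply/prodf_neq0 => m hm; apply: hgd.
  move: G0 => /eqP; rewrite !mulf_eq0 (negbTE PiX0) (negbTE DenX0) !orbF => /eqP hQ.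
  apply/rowP => k.
  have := congr1 (fun p => p.[gam 0 k]) hQ.
  rewrite /= evQ horner0 (@eval_lagr _ _ cc (fun k => gam 0 k)) => /eqP.
  rewrite mulf_eq0 => /orP[|].
    rewrite /cc mulf_eq0 (negbTE (hlamC k)) orbF subr_eq0 => /eqP.
    by [].
  move=> hp; suff : \prod_(m | m != k) (gam 0 k - gam 0 m) != 0 by rewrite hp.
  by apply/prodf_neq0 => m hm; apply: hgd.
pose c := (\sum_k mu k * gam 0 k) / Lam.
have hex : Pr (\row_k ((lam 0 k)%:C * (gam 0 k - c))).
  move=> z hz0 hd; have hw := hwz z hz0.
  have hB := hBne z hw hd.
  have hP : \prod_k (z - gam 0 k) != 0 by apply/prodf_neq0 => k _; exact: hw.
  rewrite /jnr_map hnum // hden // hipq hipa.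
  rewrite (@key _ _ mu (fun k => z - gam 0 k)) //.
  have eA : \sum_j mu j * (z - gam 0 j) = Lam * (z - c).
    under eq_bigr do rewrite mulrBr.
    rewrite sumrB -mulr_suml /c /Lam; field; exact: hLam0.
  have eE : \sum_k (\row_k0 ((lam 0 k0)%:C * (gam 0 k0 - c))) 0 k * (lam 0 k)%:C / (z - gam 0 k)
      = (z - c) * (\sum_k mu k / (z - gam 0 k)) - Lam.
    rewrite mulr_sumr /Lam -sumrB; apply: eq_bigr => k _.
    rewrite mxE /mu rmorphXn expr2; field; exact: hw.
  rewrite eA eE.
  move: hB hP; set B := \sum_k mu k / (z - gam 0 k); set P := \prod_k (z - gam 0 k) => hB hP.
  rewrite -/Lam; clearbody B P; field; by rewrite hB hP hLam0.
exists (\row_k ((lam 0 k)%:C * (gam 0 k - c))); split; first exact: hex.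
by move=> a2 H2; apply: huniq.
Qed.
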